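(* Let $\mathcal{D}=(V,\Phi)$ be a finite directed graph with adjacency matrix $M\in\{0,1\}^{V\times V}$ ($M_{vw}=1$ iff $(v,w)\in\Phi$). Let $\boldsymbol{\alpha}(t),\boldsymbol{\beta}(t)\in[0,+\infty)^V$ ($t\ge0$) be vector sequences such that $\boldsymbol{\alpha}(t)$ is non-decreasing in every component and $\boldsymbol{\beta}(t)$ is convergent, and let $\mathbf{r},\mathbf{s}\in(0,+\infty)^V$ with $r_v=s_v^{-1}$ for all $v$. Set $W_{vw}=r_vM_{vw}s_w$. Define $\boldsymbol{\omega}(t),\boldsymbol{\eta}(t)$ by $\boldsymbol{\omega}(0)=\boldsymbol{\eta}(0)=\mathbf{1}$ and, for all $v\in V$, $t\ge0$, $$\omega_v(t+1)=\frac{1}{1+\alpha_v(t)+\sum_{w}W_{vw}(1-\omega_w(t))},\qquad \eta_v(t+1)=1+\beta_v(t)+\sum_w M_{vw}\,\omega_w(t)\,\eta_w(t).$$ If $\mathcal{D}$ is strongly connected and there exists $v\in V$ such that the sequence $\alpha_v(t)$ is not identically zero, then the sequences $\boldsymbol{\omega}(t)$ and $\boldsymbol{\eta}(t)$ converge. Moreover, for every $u\in V$ the sequence $\omega_u(t)$ is non-increasing and its limit satisfies $\omega_u(\infty)<1$.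
   Context: $\mathcal{D}$ is strongly connected if for every pair $v,w\in V$ there is a directed path from $v$ to $w$ and one from $w$ to $v$. *)

(* Defs.v *)
From HB Require Import structures.
From mathcomp Require Import all_boot all_order all_algebra.
From mathcomp Require Import all_classical all_reals all_analysis.
Set Implicit Arguments. Unset Strict Implicit. Unset Printing Implicit Defensive.
Import Order.TTheory GRing.Theory Num.Theory.
Local Open Scope ring_scope.

Section Defs.
Variables (R : realType) (V : finType).

Definition adjM (Phi : rel V) (v w : V) : R := (Phi v w)%:R.

Definition strongly_connected (Phi : rel V) : Prop :=
  forall v w : V, connect Phi v w /\ connect Phi w v.

Definition Wmat (Phi : rel V) (r s : V -> R) (v w : V) : R :=
  r v * adjM Phi v w * s w.

Fixpoint omega_seq (Phi : rel V) (r s : V -> R) (alpha : nat -> V -> R)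
    (t : nat) : V -> R :=
  match t with
  | 0 => fun _ => 1
  | t'.+1 => fun v =>
      (1 + alpha t' v
         + \sum_(w : V) Wmat Phi r s v w * (1 - omega_seq Phi r s alpha t' w))^-1
  end.

Fixpoint eta_seq (Phi : rel V) (r s : V -> R) (alpha beta : nat -> V -> R)
    (t : nat) : V -> R :=
  match t with
  | 0 => fun _ => 1
  | t'.+1 => fun v =>
      1 + beta t' v
        + \sum_(w : V) adjM Phi v w * omega_seq Phi r s alpha t' w
                         * eta_seq Phi r s alpha beta t' w
  end.

End Defs.

(* Main.v *)
Require Import Defs.
From HB Require Import structures.
From mathcomp Require Import all_boot all_order all_algebra.
From mathcomp Require Import all_classical all_reals all_analysis.
From mathcomp Require Import lra ring.
Import Order.TTheory GRing.Theory Num.Theory numFieldNormedType.Exports.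
Local Open Scope classical_set_scope.
Local Open Scope ring_scope.


Lemma near_oo_ex (P : nat -> Prop) :
  (\forall n \near \oo, P n) -> exists N, forall n, (N <= n)%N -> P n.
Proof. by case=> N _ H; exists N => n; apply: H. Qed.

Lemma cvgn_ex {R : realType} (u : nat -> R) : cvg (u @ \oo) ->
  forall e : R, 0 < e -> exists N, forall n, (N <= n)%N -> `|lim (u @ \oo) - u n| <= e.
Proof. move=> /cvgrPdist_le H e e0; exact: near_oo_ex (H e e0). Qed.

Lemma cauchy_ex_cvg {R : realType} (u : nat -> R) :
  (forall e : R, 0 < e -> exists N, forall m n, (N <= m)%N -> (N <= n)%N -> `|u m - u n| <= e) ->
  cvg (u @ \oo).
Proof.
move=> H; apply/cauchy_cvgP; apply/cauchy_ballP => e e0.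
have [N HN] := H (e / 2) (divr_gt0 e0 (ltr0Sn _ 1)).
rewrite !near_simpl /=.
exists ([set n | (N <= n)%N], [set n | (N <= n)%N]).
  by split; exists N.
case=> m n /= [Hm Hn]; rewrite -ball_normE /=.
apply: le_lt_trans (HN _ _ Hm Hn) _.
by rewrite ltr_pdivrMr // ltr_pMr // ltr1n.
Qed.

Lemma unif_ex (V : finType) (P : V -> nat -> Prop) :
  (forall v, exists N, forall n, (N <= n)%N -> P v n) ->
  exists N, forall n, (N <= n)%N -> forall v, P v n.
Proof.
move=> H; apply: near_oo_ex; apply: filter_forall => v.
by have [N HN] := H v; exists N.
Qed.

Lemma inv_le {R : realType} (x y : R) : 0 < x -> x <= y -> y^-1 <= x^-1.
Proof.
by move=> x0 xy; rewrite lef_pV2 ?posrE // (lt_le_trans x0 xy).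
Qed.

Lemma sum_ge_term {R : realType} {V : finType} (f : V -> R) (w : V) :
  (forall v, 0 <= f v) -> f w <= \sum_v f v.
Proof.
move=> f0; rewrite (bigD1 w) //= lerDl; exact: sumr_ge0.
Qed.

Lemma min_pos {R : realType} (V : finType) (f : V -> R) :
  (forall v, 0 < f v) -> exists e, 0 < e /\ forall v, e <= f v.
Proof.
move=> f0.
have S0 : 0 <= \sum_v (f v)^-1 by apply: sumr_ge0 => v _; rewrite invr_ge0 ltW.
exists (1 + \sum_v (f v)^-1)^-1; split.
  by rewrite invr_gt0; lra.
move=> v; rewrite -[f v]invrK; apply: inv_le; first by rewrite invr_gt0.
have H : forall u, 0 <= (f u)^-1 by move=> u; rewrite invr_ge0 ltW.
have := sum_ge_term _ v H; lra.
Qed.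

Lemma le_eps {R : realType} (x y S : R) : 0 <= S ->
  (forall e, 0 < e -> x <= y + e * S) -> x <= y.
Proof.
move=> S0 H; apply/ler_addgt0Pr => e e0.
have e1 : 0 < e / (S + 1) by apply: divr_gt0 => //; lra.
apply: le_trans (H _ e1) _; rewrite lerD2l.
have -> : e / (S + 1) * S = e * (S / (S + 1)) by rewrite mulrAC mulrA.
rewrite ler_piMr //; first exact: ltW.
by rewrite ler_pdivrMr; lra.
Qed.

Lemma connect_ind (V : finType) (Phi : rel V) (P : V -> Prop) v0 :
  P v0 -> (forall u w, Phi u w -> P w -> P u) -> forall u, connect Phi u v0 -> P u.
Proof.
move=> P0 step u /connectP[p]; elim: p u => [|w p IH] u /=; first by move=> _ <-.
move=> /andP[huw hp] hl; apply: step huw _; exact: IH hp hl.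
Qed.

Lemma ub_fin {R : realType} (V : finType) (f : V -> nat -> R) :
  (forall v, exists M, forall t, f v t <= M) -> exists M, 0 <= M /\ forall v t, f v t <= M.
Proof.
move=> H.
suff [M [M0 HM]] : exists M, 0 <= M /\ forall v, v \in enum V -> forall t, f v t <= M.
  by exists M; split => // v; apply: HM; rewrite mem_enum.
elim: (enum V) => [|a l [M [M0 HM]]]; first by exists 0.
have [Ma HMa] := H a.
exists (Num.max M Ma); split; first by rewrite le_max M0.
move=> v; rewrite inE => /orP[/eqP -> | vl] t; rewrite le_max.
  by rewrite HMa orbT.
by rewrite HM.
Qed.



Section Spread.
Variables (R : realType) (V : finType) (Phi : rel V) (B : V -> V -> R).
Hypothesis B_ge0 : forall v w, 0 <= B v w.

Definition good (z : V -> R) := (forall v, 0 < z v) /\ (forall v, \sum_w B v w * z w <= z v).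
Definition strict (z : V -> R) v : bool := \sum_w B v w * z w < z v.

Lemma spread_step z : good z -> exists z', good z' /\ (forall v, strict z v -> strict z' v) /\
  (forall u w, Phi u w -> 0 < B u w -> strict z w -> strict z' u).
Proof.
move=> [zp zle].
pose f v := if strict z v then Num.min (z v) (z v - \sum_w B v w * z w) else z v.
have fp : forall v, 0 < f v.
  move=> v; rewrite /f; case: ifP => h //.
  by rewrite lt_min zp /= subr_gt0.
have [e [e0 He]] := min_pos _ _ fp.
pose d := e / 2.
have d0 : 0 < d by rewrite /d; lra.
have de : d < e by rewrite /d; lra.
have fz : forall v, f v <= z v.
  by move=> v; rewrite /f; case: ifP => h //; rewrite ge_min lexx.
pose z' v := z v - d * (strict z v)%:R.
pose Q v := \sum_w B v w * (strict z w)%:R.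
have Q0 : forall v, 0 <= Q v.
  by move=> v; apply: sumr_ge0 => w _; apply: mulr_ge0.
have Sz' : forall v, \sum_w B v w * z' w = \sum_w B v w * z w - d * Q v.
  move=> v; rewrite /Q mulr_sumr -sumrB; apply: eq_bigr => w _; rewrite /z'; ring.
have strict1 : forall v, strict z v -> strict z' v.
  move=> v sv; rewrite /strict Sz' /z' sv.
  have := He v; rewrite /f sv le_min => /andP[h1 h].
  have := Q0 v; have := zle v; rewrite mulr1; nra.
exists z'; split; [split|split] => //.
- move=> v; rewrite /z'; have := He v; have := fz v; have := zp v.
  by case: (strict z v); rewrite ?mulr1 ?mulr0; lra.
- move=> v; case sv: (strict z v).
    by apply: ltW; exact: strict1.
  rewrite Sz' /z' sv mulr0 subr0; have := zle v; have := Q0 v; nra.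
- move=> u w huw Bp sw; case su: (strict z u); first exact: strict1.
  rewrite /strict Sz' /z' su mulr0 subr0.
  have hQ : B u w <= Q u.
    have := sum_ge_term (fun w' => B u w' * (strict z w')%:R) w.
    by rewrite sw mulr1; apply => w'; apply: mulr_ge0.
  have := zle u; have : 0 < d * Q u by apply: mulr_gt0 => //; lra.
  lra.
Qed.

Fixpoint reach (S0 : V -> bool) k u : Prop :=
  match k with
  | 0 => S0 u
  | k.+1 => reach S0 k u \/ exists w, Phi u w /\ reach S0 k w
  end.

Lemma reach_mono S0 k m u : reach S0 k u -> reach S0 (k + m) u.
Proof. by elim: m => [|m IH]; rewrite ?addn0 // addnS /= => h; left; apply: IH. Qed.

Lemma reach_unif S0 (l : seq V) : (forall u, exists k, reach S0 k u) ->
  exists k, forall u, u \in l -> reach S0 k u.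
Proof.
move=> H; elim: l => [|a l [k IH]]; first by exists 0.
have [ka Hka] := H a.
exists (k + ka)%N => u; rewrite inE => /orP[/eqP ->|ul].
  by rewrite addnC; apply: reach_mono.
exact: reach_mono (IH u ul).
Qed.

Lemma spread z v0 : good z -> strict z v0 ->
  (forall u w, Phi u w -> 0 < B u w \/ strict z u) -> strongly_connected Phi ->
  exists z', (forall v, 0 < z' v) /\ forall v, strict z' v.
Proof.
move=> gz sv0 edge hSC.
have claim : forall k, exists z', good z' /\ (forall v, strict z v -> strict z' v) /\
    (forall u, reach (strict z) k u -> strict z' u).
  elim=> [|k [z1 [g1 [s1 r1]]]]; first by exists z.
  have [z2 [g2 [s2 e2]]] := spread_step _ g1.
  exists z2; split => //; split; first by move=> v /s1/s2.
  move=> u /= [/r1/s2 //|[w [huw /r1 sw]]].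
  case: (edge u w huw) => [Bp|su]; first exact: e2 huw Bp sw.
  exact/s2/s1.
have allr : forall u, exists k, reach (strict z) k u.
  move=> u; apply: (@connect_ind V Phi (fun u => exists k, reach (strict z) k u) v0 _ _ u (proj1 (hSC u v0))).
    by exists 0.
  by move=> u' w huw [k hk]; exists k.+1; right; exists w.
have [k Hk] := reach_unif _ (enum V) allr.
have [z' [[zp _] [_ r']]] := claim k.
exists z'; split => // v; apply: r'; apply: Hk; by rewrite mem_enum.
Qed.

End Spread.



Section Main.
Variables (R : realType) (V : finType) (Phi : rel V)
    (alpha beta : nat -> V -> R) (r s : V -> R).
Hypotheses (alpha_ge0 : forall t v, 0 <= alpha t v)
    (beta_ge0 : forall t v, 0 <= beta t v)
    (alpha_nd : forall t v, alpha t v <= alpha t.+1 v)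
    (beta_cvg : forall v, cvg ((fun t => beta t v) @ \oo))
    (r_gt0 : forall v, 0 < r v) (s_gt0 : forall v, 0 < s v)
    (rs : forall v, r v = (s v)^-1)
    (hSC : strongly_connected Phi).

Local Notation om := (omega_seq Phi r s alpha).
Local Notation et := (eta_seq Phi r s alpha beta).
Local Notation W := (Wmat Phi r s).

Lemma adj_ge0 v w : 0 <= adjM R Phi v w.
Proof. by rewrite /adjM ler0n. Qed.

Lemma adj_le1 v w : adjM R Phi v w <= 1.
Proof. by rewrite /adjM; case: (Phi v w). Qed.

Lemma W_ge0 v w : 0 <= W v w.
Proof.
rewrite /Wmat; apply: mulr_ge0; last exact: ltW.
by apply: mulr_ge0; [exact: ltW | exact: adj_ge0].
Qed.

Lemma W_gt0 v w : Phi v w -> 0 < W v w.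
Proof.
move=> h; rewrite /Wmat /adjM h; apply: mulr_gt0 => //.
by rewrite mulr1n mulr1.
Qed.

Definition Den t v := 1 + alpha t v + \sum_w W v w * (1 - om t w).

Lemma omS t v : om t.+1 v = (Den t v)^-1.
Proof. by []. Qed.

Lemma om_bnd t v : 0 < om t v <= 1.
Proof.
elim: t v => [|t IH] v /=; first by rewrite ltr01 lexx.
have D1 : 1 <= 1 + alpha t v + \sum_w W v w * (1 - om t w).
  have : 0 <= \sum_w W v w * (1 - om t w).
    apply: sumr_ge0 => w _; apply: mulr_ge0; first exact: W_ge0.
    by have /andP[_ h] := IH w; rewrite subr_ge0.
  have := alpha_ge0 t v; lra.
apply/andP; split; first by rewrite invr_gt0; lra.
by rewrite invf_le1 //; lra.
Qed.

Lemma om_gt0 t v : 0 < om t v.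
Proof. by have /andP[] := om_bnd t v. Qed.
Lemma om_le1 t v : om t v <= 1.
Proof. by have /andP[] := om_bnd t v. Qed.

Lemma Den_ge1 t v : 1 <= Den t v.
Proof.
rewrite /Den.
have : 0 <= \sum_w W v w * (1 - om t w).
  apply: sumr_ge0 => w _; apply: mulr_ge0; first exact: W_ge0.
  by rewrite subr_ge0 om_le1.
have := alpha_ge0 t v; lra.
Qed.

Lemma om_ni t v : om t.+1 v <= om t v.
Proof.
elim: t v => [|t IH] v; first exact: om_le1.
rewrite !omS; apply: inv_le; first by have := Den_ge1 t v; lra.
rewrite /Den; have := alpha_nd t v.
have : \sum_w W v w * (1 - om t w) <= \sum_w W v w * (1 - om t.+1 w).
  apply: ler_sum => w _; apply: ler_wpM2l; first exact: W_ge0.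
  by rewrite lerD2l lerN2 IH.
lra.
Qed.

Lemma om_mono t t' v : (t <= t')%N -> om t' v <= om t v.
Proof.
move=> /subnK <-; elim: (t' - t)%N => [|k IH] //=.
exact: le_trans (om_ni _ _) IH.
Qed.

Lemma alpha_mono t t' v : (t <= t')%N -> alpha t v <= alpha t' v.
Proof.
move=> /subnK <-; elim: (t' - t)%N => [|k IH] //=.
exact: le_trans IH (alpha_nd _ _).
Qed.

Lemma om_cvg v : cvg ((fun t => om t v) @ \oo).
Proof.
apply: nonincreasing_is_cvgn.
  by apply/nonincreasing_seqP => t; exact: om_ni.
by exists 0 => x [t _ <-]; exact: ltW (om_gt0 t v).
Qed.

Definition omL v := lim ((fun t => om t v) @ \oo).

Lemma omL_le t v : omL v <= om t v.
Proof.
apply: (nonincreasing_cvgn_ge (u_ := fun t => om t v)); last exact: om_cvg.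
by apply/nonincreasing_seqP => k; exact: om_ni.
Qed.

Lemma omL_ge0 v : 0 <= omL v.
Proof.
apply: limr_ge; first exact: om_cvg.
by near=> t; exact: ltW (om_gt0 t v).
Unshelve. all: by end_near.
Qed.

Lemma om_approx e : 0 < e ->
  exists T, forall t, (T <= t)%N -> forall v, om t v <= omL v + e.
Proof.
move=> e0; apply: unif_ex => v.
have [N HN] := @cvgn_ex _ _ (om_cvg v) e e0.
exists N => n /HN; rewrite ler_norml => /andP[h1 h2]; rewrite /omL; lra.
Qed.


Lemma sumW_ge u w t : W u w * (1 - om t w) <= \sum_w' W u w' * (1 - om t w').
Proof.
apply: (sum_ge_term (fun w' => W u w' * (1 - om t w'))) => w'.
by apply: mulr_ge0; [exact: W_ge0 | rewrite subr_ge0 om_le1].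
Qed.

Lemma sumW_ge0 u t : 0 <= \sum_w' W u w' * (1 - om t w').
Proof.
by apply: sumr_ge0 => w' _; apply: mulr_ge0; [exact: W_ge0 | rewrite subr_ge0 om_le1].
Qed.

Lemma om_lt1_ev (hnz : exists v, exists t, alpha t v != 0) u :
  exists T c, c < 1 /\ forall t, (T <= t)%N -> om t u <= c.
Proof.
case: hnz => v0 [t0 hv0].
have a0 : 0 < alpha t0 v0 by rewrite lt_def hv0 alpha_ge0.
apply: (@connect_ind V Phi (fun u => exists T c, c < 1 /\ forall t, (T <= t)%N -> om t u <= c) _ _ _ _ (proj1 (hSC u v0))).
  exists t0.+1, (1 + alpha t0 v0)^-1; split; first by rewrite invf_lt1; lra.
  case=> // t' ht'; rewrite omS; apply: inv_le; first lra.
  have := alpha_mono t0 t' v0 ht'; have := sumW_ge0 v0 t'; rewrite /Den; lra.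
move=> u' w huw [T [c [c1 Hc]]].
have Wp := W_gt0 _ _ huw.
have p0 : 0 < W u' w * (1 - c) by apply: mulr_gt0 => //; lra.
exists T.+1, (1 + W u' w * (1 - c))^-1; split; first by rewrite invf_lt1; lra.
case=> // t' ht'; rewrite omS; apply: inv_le; first lra.
have h1 := sumW_ge u' w t'.
have h2 : W u' w * (1 - c) <= W u' w * (1 - om t' w).
  by apply: ler_wpM2l; [exact: ltW | have := Hc _ ht'; lra].
have := sumW_ge0 u' t'; have := alpha_ge0 t' u'; rewrite /Den; lra.
Qed.

Lemma omL_lt1 (hnz : exists v, exists t, alpha t v != 0) u : omL u < 1.
Proof.
have [T [c [c1 Hc]]] := om_lt1_ev hnz u.
apply: le_lt_trans c1; apply: limr_le; first exact: om_cvg.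
near=> t; apply: Hc; near: t; exact: nbhs_infty_ge.
Unshelve. all: by end_near.
Qed.


Lemma contraction_vec (hnz : exists v, exists t, alpha t v != 0) :
  exists T lam (y : V -> R), 0 <= lam /\ lam < 1 /\ (forall v, 0 < y v) /\
    forall t, (T <= t)%N -> forall v,
      \sum_w adjM R Phi v w * om t w * y w <= lam * y v.
Proof.
have omL1 := omL_lt1 hnz.
case: hnz => v0 [t0 hv0].
have a0 : 0 < alpha t0 v0 by rewrite lt_def hv0 alpha_ge0.
pose K := 1 + \sum_v \sum_w W v w.
have SWv : forall v, \sum_w W v w <= K - 1.
  move=> v; rewrite /K addrC addKr.
  apply: (sum_ge_term (fun v => \sum_w W v w)) => v'.
  by apply: sumr_ge0 => w _; exact: W_ge0.
have SW0 : forall v, 0 <= \sum_w W v w by move=> v; apply: sumr_ge0 => w _; exact: W_ge0.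
pose z w := if omL w == 0 then K else (omL w)^-1 - 1.
pose B v w := W v w * omL w.
have B_ge0 : forall v w, 0 <= B v w by move=> v w; apply: mulr_ge0; [exact: W_ge0|exact: omL_ge0].
have g_eq : forall w, omL w * z w = (1 - omL w) - (omL w == 0)%:R.
  move=> w; rewrite /z; case: eqP => [->|h]; first by rewrite mul0r /= subr0 subrr.
  by rewrite mulrBr divff ?mulr1 ?subr0 //; apply/eqP.
have zp : forall w, 0 < z w.
  move=> w; rewrite /z; case: eqP => [_|h]; first by have := SW0 w; have := SWv w; lra.
  have h0 : 0 < omL w by rewrite lt_def omL_ge0 andbT; apply/eqP.
  by rewrite subr_gt0 invf_gt1.
have SBz : forall v, \sum_w B v w * z w =
    \sum_w W v w * (1 - omL w) - \sum_w W v w * (omL w == 0)%:R.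
  move=> v; rewrite -sumrB; apply: eq_bigr => w _.
  by rewrite /B -mulrA g_eq; ring.
have SZ0 : forall v, 0 <= \sum_w W v w * (omL w == 0)%:R.
  by move=> v; apply: sumr_ge0 => w _; apply: mulr_ge0; [exact: W_ge0|].
have SWle : forall v, \sum_w W v w * (1 - omL w) <= \sum_w W v w.
  move=> v; apply: ler_sum => w _; have := W_ge0 v w; have := omL_ge0 w; nra.
have key : forall v, omL v != 0 ->
    \sum_w W v w * (1 - omL w) <= (omL v)^-1 - 1 - alpha t0 v.
  move=> v hv; have h0 : 0 < omL v by rewrite lt_def omL_ge0 andbT.
  apply: (@le_eps _ _ _ _ (SW0 v)) => e e0.
  have [T HT] := om_approx _ e0.
  pose t := maxn T t0.
  have h1 : \sum_w W v w * (1 - omL w) <=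
      \sum_w W v w * (1 - om t w) + e * \sum_w W v w.
    rewrite mulr_sumr -big_split /=; apply: ler_sum => w _.
    have := HT t (leq_maxl _ _) w; have := W_ge0 v w; nra.
  have h2 : Den t v <= (omL v)^-1.
    rewrite -[Den t v]invrK -omS; apply: inv_le => //; exact: omL_le.
  have h3 := alpha_mono t0 t v (leq_maxr _ _).
  move: h2; rewrite /Den; lra.
have le_all : forall v, \sum_w B v w * z w <= z v.
  move=> v; rewrite SBz /z; case: eqP => [_|/eqP h].
    have := SWv v; have := SWle v; have := SZ0 v; lra.
  have := key v h; have := SZ0 v; have := alpha_ge0 t0 v; lra.
have stZ : forall v, omL v == 0 -> @strict R V B z v.
  move=> v h; rewrite /strict SBz /z h.
  have := SWv v; have := SWle v; have := SZ0 v; lra.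
have stA : forall v, 0 < alpha t0 v -> @strict R V B z v.
  move=> v ha; case hv: (omL v == 0); first exact: stZ.
  rewrite /strict SBz /z hv.
  have := key v (negbT hv); have := SZ0 v; lra.
have stN : forall v w, Phi v w -> omL w == 0 -> @strict R V B z v.
  move=> v w hvw hw; case hv: (omL v == 0); first exact: stZ.
  rewrite /strict SBz /z hv.
  have : W v w <= \sum_w W v w * (omL w == 0)%:R.
    have := sum_ge_term (fun w' => W v w' * (omL w' == 0)%:R) w.
    rewrite hw mulr1; apply => w'; apply: mulr_ge0; [exact: W_ge0|exact: ler0n].
  have := W_gt0 _ _ hvw.
  have := key v (negbT hv); have := alpha_ge0 t0 v; lra.
have [z' [z'p z's]] : exists z', (forall v, 0 < z' v) /\ forall v, @strict R V B z' v.
  apply: (@spread R V Phi B B_ge0 z v0) => //.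
  - exact: stA.
  - move=> u w huw; case hw: (omL w == 0); first by right; exact: stN huw hw.
    left; apply: mulr_gt0; first exact: W_gt0.
    by rewrite lt_def omL_ge0 hw.
have gapp : forall v, 0 < z' v - \sum_w B v w * z' w.
  by move=> v; rewrite subr_gt0; exact: z's.
pose Sz v := \sum_w W v w * z' w.
have Sz0 : forall v, 0 <= Sz v.
  by move=> v; apply: sumr_ge0 => w _; apply: mulr_ge0; [exact: W_ge0|exact: ltW].
have SBz0 : forall v, 0 <= \sum_w B v w * z' w.
  by move=> v; apply: sumr_ge0 => w _; apply: mulr_ge0; [exact: B_ge0|exact: ltW].
have [e1 [e10 He1]] := min_pos _ _ (fun v => divr_gt0 (gapp v)
   (mulr_gt0 (ltr0Sn R 1) (ltr_wpDl (Sz0 v) ltr01))).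
have [e2 [e20 He2]] := min_pos _ _ (fun v => divr_gt0 (gapp v)
   (mulr_gt0 (ltr0Sn R 1) (z'p v))).
have [T HT] := om_approx _ e10.
exists T, (1 - e2), (fun v => s v * z' v); split; [|split; [|split]].
- have := He2 v0; rewrite ler_pdivlMr; last exact: (mulr_gt0 (ltr0Sn R 1) (z'p v0)).
  have := SBz0 v0; have := z'p v0; nra.
- lra.
- by move=> v; apply: mulr_gt0.
move=> t ht v.
have conv : \sum_w adjM R Phi v w * om t w * (s w * z' w) =
    s v * \sum_w W v w * om t w * z' w.
  rewrite mulr_sumr; apply: eq_bigr => w _; rewrite /Wmat rs; field.
  by apply: lt0r_neq0.
have h1 : \sum_w W v w * om t w * z' w <= \sum_w B v w * z' w + e1 * Sz v.
  rewrite /Sz mulr_sumr -big_split /=; apply: ler_sum => w _.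
  have := HT t ht w; have := W_ge0 v w; have := z'p w; rewrite /B.
  move=> h1 h2 h3.
  have : 0 <= W v w * z' w by apply: mulr_ge0 => //; exact: ltW.
  nra.
have h2 : e1 * Sz v <= (z' v - \sum_w B v w * z' w) / 2.
  have := He1 v; rewrite ler_pdivlMr; last exact: (mulr_gt0 (ltr0Sn R 1) (ltr_wpDl (Sz0 v) ltr01)).
  lra.
have h3 : e2 * z' v <= (z' v - \sum_w B v w * z' w) / 2.
  have := He2 v; rewrite ler_pdivlMr; last exact: (mulr_gt0 (ltr0Sn R 1) (z'p v)).
  lra.
rewrite conv mulrCA; apply: ler_wpM2l; first exact: ltW.
lra.
Qed.


Lemma et_ge0 t v : 0 <= et t v.
Proof.
elim: t v => [|t IH] v /=; first exact: ler01.
apply: addr_ge0; first by apply: addr_ge0 => //; exact: ler01.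
apply: sumr_ge0 => w _; apply: mulr_ge0; last exact: IH.
by apply: mulr_ge0; [exact: adj_ge0 | exact: ltW (om_gt0 _ _)].
Qed.

Lemma beta_bnd : exists M, 0 <= M /\ forall v t, beta t v <= M.
Proof.
apply: (ub_fin _ (fun v t => beta t v)) => v.
have /cvg_seq_bounded/bounded_fun_has_ubound[M HM] := beta_cvg v.
by exists M => t; apply: HM; exists t.
Qed.

Lemma eta_cvg (hnz : exists v, exists t, alpha t v != 0) u :
  cvg ((fun t => et t u) @ \oo).
Proof.
have [T [lam [y [l0 [l1 [yp Hc]]]]]] := contraction_vec hnz.
have [Bb [Bb0 HBb]] := beta_bnd.
pose Yi := \sum_v (y v)^-1.
have Yi0 : 0 <= Yi by apply: sumr_ge0 => v _; rewrite invr_ge0 ltW.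
have Yiy : forall v, 1 <= Yi * y v.
  move=> v; have h : forall v, 0 <= (y v)^-1 by move=> v'; rewrite invr_ge0 ltW.
  have := sum_ge_term _ v h; rewrite -/Yi => H.
  rewrite -(mulVf (lt0r_neq0 (yp v))); apply: ler_wpM2r => //; exact: ltW.
have l1' : 0 < 1 - lam by lra.
pose Ky := (1 + Bb) / (1 - lam) * Yi + \sum_v et T v / y v.
have P0 : 0 <= (1 + Bb) / (1 - lam) * Yi.
  by apply: mulr_ge0 => //; apply: divr_ge0; lra.
have S0 : 0 <= \sum_v et T v / y v.
  by apply: sumr_ge0 => v _; apply: divr_ge0; [exact: et_ge0 | exact: ltW].
have Ky0 : 0 <= Ky by rewrite /Ky; lra.
have Kbig : forall v, 1 + Bb <= (1 - lam) * Ky * y v.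
  move=> v.
  have e : (1 - lam) * ((1 + Bb) / (1 - lam) * Yi) * y v = (1 + Bb) * (Yi * y v).
    by field; rewrite lt0r_neq0.
  have : (1 - lam) * ((1 + Bb) / (1 - lam) * Yi) * y v <= (1 - lam) * Ky * y v.
    apply: ler_wpM2r; first exact: ltW.
    by apply: ler_wpM2l; [exact: ltW | rewrite /Ky lerDl].
  rewrite e; have := Yiy v; nra.
have bnd : forall t, (T <= t)%N -> forall v, et t v <= Ky * y v.
  move=> t /subnK <-; elim: (t - T)%N => [|k IH] v.
    rewrite add0n.
    have := sum_ge_term (fun v => et T v / y v) v (fun v => divr_ge0 (et_ge0 T v) (ltW (yp v))).
    rewrite -/(Ky) => h.
    have : et T v / y v <= Ky by rewrite /Ky; lra.
    by rewrite ler_pdivrMr.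
  rewrite addSn /=.
  have h1 : \sum_w adjM R Phi v w * om (k + T) w * et (k + T) w <=
      Ky * \sum_w adjM R Phi v w * om (k + T) w * y w.
    rewrite mulr_sumr; apply: ler_sum => w _.
    have := IH w; have := mulr_ge0 (adj_ge0 v w) (ltW (om_gt0 (k + T) w)); nra.
  have h2 := Hc (k + T) (leq_addl _ _) v.
  have h5 : Ky * \sum_w adjM R Phi v w * om (k + T) w * y w <= Ky * (lam * y v).
    exact: ler_wpM2l.
  have h3 := HBb v (k + T).
  have h4 := Kbig v.
  lra.
apply: cauchy_ex_cvg => eps eps0.
pose Y := \sum_v y v.
have Yy : forall v, y v <= Y.
  by move=> v; apply: (sum_ge_term y v) => v'; exact: ltW.
have Y0 : 0 <= Y by apply: sumr_ge0 => v _; exact: ltW.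
pose C := (1 + Ky * Y) * Yi.
have C0 : 0 <= C by apply: mulr_ge0 => //; have := mulr_ge0 Ky0 Y0; lra.
pose A := C / (1 - lam) * Y.
have A0 : 0 <= A by apply: mulr_ge0 => //; apply: divr_ge0 => //; lra.
pose dl := eps / (2 * (A + 1)).
have dl0 : 0 < dl by apply: divr_gt0 => //; lra.
have dlA : dl * A <= eps / 2.
  have e : dl * (A + 1) = eps / 2 by rewrite /dl; field; lra.
  have : 0 <= dl by lra.
  nra.
pose e' := eps / (2 * (2 * Ky * Y + 1)).
have KY0 : 0 <= Ky * Y by exact: mulr_ge0.
have e'0 : 0 < e' by apply: divr_gt0 => //; lra.
have [k0 Hk0] : exists k0, lam ^+ k0 <= e'.
  have : `|lam| < 1 by rewrite ger0_norm.
  move=> /cvg_expr /cvgrPdist_le /(_ e' e'0) /near_oo_ex [N HN].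
  exists N; have := HN N (leqnn N).
  by rewrite sub0r normrN ger0_norm ?exprn_ge0.
have lamk : lam ^+ k0 * (2 * Ky) * Y <= eps / 2.
  have e : e' * (2 * Ky * Y + 1) = eps / 2 by rewrite /e'; field; lra.
  have : 0 <= lam ^+ k0 by exact: exprn_ge0.
  nra.
have [N1 HN1] : exists N1, forall n, (N1 <= n)%N -> forall v,
    `|lim ((fun t => beta t v) @ \oo) - beta n v| <= dl / 2 /\
    `|lim ((fun t => om t v) @ \oo) - om n v| <= dl / 2.
  apply: unif_ex => v.
  have dl2 : 0 < dl / 2 by lra.
  have [Na HNa] := @cvgn_ex _ _ (beta_cvg v) _ dl2.
  have [Nb HNb] := @cvgn_ex _ _ (om_cvg v) _ dl2.
  exists (maxn Na Nb) => n hn; split.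
    by apply: HNa; apply: leq_trans hn; exact: leq_maxl.
  by apply: HNb; apply: leq_trans hn; exact: leq_maxr.
have close : forall m n, (N1 <= m)%N -> (N1 <= n)%N -> forall v,
    `|beta m v - beta n v| <= dl /\ `|om m v - om n v| <= dl.
  move=> m n hm hn v.
  have [a1 b1] := HN1 m hm v; have [a2 b2] := HN1 n hn v.
  split.
    apply: le_trans (ler_distD (lim ((fun t => beta t v) @ \oo)) _ _) _.
    by rewrite distrC; lra.
  apply: le_trans (ler_distD (lim ((fun t => om t v) @ \oo)) _ _) _.
  by rewrite distrC; lra.
pose N0 := maxn T N1.
pose G k := lam ^+ k * (2 * Ky) + dl * C / (1 - lam).
have G0 : forall k, 0 <= G k.
  move=> k; apply: addr_ge0.
    by apply: mulr_ge0; [exact: exprn_ge0 | lra].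
  by apply: divr_ge0; [apply: mulr_ge0; lra | lra].
have Grec : forall k, lam * G k + dl * C = G k.+1.
  by move=> k; rewrite /G exprS; field; rewrite lt0r_neq0.
have claim : forall k m n, (N0 + k <= m)%N -> (N0 + k <= n)%N -> forall v,
    `|et m v - et n v| <= G k * y v.
  elim=> [|k IH] m n hm hn v.
    rewrite addn0 in hm hn.
    have hTm : (T <= m)%N by apply: leq_trans hm; exact: leq_maxl.
    have hTn : (T <= n)%N by apply: leq_trans hn; exact: leq_maxl.
    apply: le_trans (ler_normB _ _) _.
    rewrite !ger0_norm ?et_ge0 //.
    have := bnd m hTm v; have := bnd n hTn v.
    have : 0 <= dl * C / (1 - lam) * y v.
      by apply: mulr_ge0; [apply: divr_ge0; [apply: mulr_ge0; lra | lra] | exact: ltW].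
    rewrite /G expr0 mul1r; lra.
  case: m hm => [|m'] hm; first by rewrite addnS in hm.
  case: n hn => [|n'] hn; first by rewrite addnS in hn.
  rewrite addnS ltnS in hm; rewrite addnS ltnS in hn.
  have hTm : (T <= m')%N by apply: leq_trans hm; apply: leq_trans (leq_addr _ _); exact: leq_maxl.
  have hN1m : (N1 <= m')%N by apply: leq_trans hm; apply: leq_trans (leq_addr _ _); exact: leq_maxr.
  have hTn : (T <= n')%N by apply: leq_trans hn; apply: leq_trans (leq_addr _ _); exact: leq_maxl.
  have hN1n : (N1 <= n')%N by apply: leq_trans hn; apply: leq_trans (leq_addr _ _); exact: leq_maxr.
  have E : et m'.+1 v - et n'.+1 v = (beta m' v - beta n' v) +
      \sum_w adjM R Phi v w * (om m' w * et m' w - om n' w * et n' w).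
    have -> : \sum_w adjM R Phi v w * (om m' w * et m' w - om n' w * et n' w) =
        \sum_w adjM R Phi v w * om m' w * et m' w - \sum_w adjM R Phi v w * om n' w * et n' w.
      by rewrite -sumrB; apply: eq_bigr => w _; ring.
    rewrite /=; ring.
  have term : forall w, `|adjM R Phi v w * (om m' w * et m' w - om n' w * et n' w)| <=
      adjM R Phi v w * om m' w * (G k * y w) + dl * Ky * (adjM R Phi v w * y w).
    move=> w; rewrite normrM (ger0_norm (adj_ge0 v w)).
    have eqx : om m' w * et m' w - om n' w * et n' w =
        om m' w * (et m' w - et n' w) + (om m' w - om n' w) * et n' w by ring.
    have h1 : `|om m' w * et m' w - om n' w * et n' w| <=
        om m' w * (G k * y w) + dl * (Ky * y w).
      rewrite eqx; apply: le_trans (ler_normD _ _) _.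
      rewrite !normrM (ger0_norm (ltW (om_gt0 m' w))) (ger0_norm (et_ge0 n' w)).
      have := IH m' n' hm hn w; have := (close m' n' hN1m hN1n w).2.
      have := bnd n' hTn w; have := om_gt0 m' w; have := et_ge0 n' w.
      have := normr_ge0 (om m' w - om n' w); have := normr_ge0 (et m' w - et n' w).
      nra.
    have := adj_ge0 v w; nra.
  have hsum : `|\sum_w adjM R Phi v w * (om m' w * et m' w - om n' w * et n' w)| <=
      G k * (lam * y v) + dl * Ky * Y.
    apply: le_trans (ler_norm_sum _ _ _) _.
    apply: le_trans (ler_sum _ (fun w _ => term w)) _.
    rewrite big_split /=.
    have -> : \sum_w adjM R Phi v w * om m' w * (G k * y w) =
        G k * \sum_w adjM R Phi v w * om m' w * y w.
      by rewrite mulr_sumr; apply: eq_bigr => w _; ring.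
    rewrite -mulr_sumr.
    have h1 : G k * \sum_w adjM R Phi v w * om m' w * y w <= G k * (lam * y v).
      by apply: ler_wpM2l => //; exact: Hc.
    have h2 : \sum_w adjM R Phi v w * y w <= Y.
      apply: ler_sum => w _; have := adj_le1 v w; have := yp w; nra.
    have : 0 <= dl * Ky by apply: mulr_ge0; lra.
    nra.
  rewrite E; apply: le_trans (ler_normD _ _) _.
  have := (close m' n' hN1m hN1n v).1.
  rewrite -Grec mulrDl.
  have : dl * (1 + Ky * Y) <= dl * C * y v.
    have -> : dl * C * y v = dl * ((1 + Ky * Y) * (Yi * y v)) by rewrite /C; ring.
    apply: ler_wpM2l; first lra.
    have := Yiy v; have := mulr_ge0 Ky0 Y0; nra.
  lra.
exists (N0 + k0)%N => m n hm hn.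
apply: le_trans (claim k0 m n hm hn u) _.
have hGY : G k0 * y u <= G k0 * Y by apply: ler_wpM2l; [exact: G0 | exact: Yy].
have : G k0 * Y = lam ^+ k0 * (2 * Ky) * Y + dl * A.
  by rewrite /G /A; field; rewrite lt0r_neq0.
lra.
Qed.



Lemma main_res (hnz : exists v, exists t, alpha t v != 0) :
  (forall u, cvg ((fun t => om t u) @ \oo)) /\
  (forall u, cvg ((fun t => et t u) @ \oo)) /\
  (forall u, (forall t, om t.+1 u <= om t u) /\
             lim ((fun t => om t u) @ \oo) < 1).
Proof.
split; first exact: om_cvg.
split; first exact: eta_cvg hnz.
move=> u; split; first by move=> t; exact: om_ni.
exact: omL_lt1 hnz u.
Qed.

End Main.

Theorem lemma4 (R : realType) (V : finType) (Phi : rel V)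
    (alpha beta : nat -> V -> R) (r s : V -> R)
    (alpha_ge0 : forall t v, 0 <= alpha t v)
    (beta_ge0 : forall t v, 0 <= beta t v)
    (alpha_nd : forall t v, alpha t v <= alpha t.+1 v)
    (beta_cvg : forall v, cvg ((fun t => beta t v) @ \oo))
    (r_gt0 : forall v, 0 < r v) (s_gt0 : forall v, 0 < s v)
    (rs : forall v, r v = (s v)^-1)
    (hSC : strongly_connected Phi)
    (hnz : exists v, exists t, alpha t v != 0) :
  (forall u, cvg ((fun t => omega_seq Phi r s alpha t u) @ \oo)) /\
  (forall u, cvg ((fun t => eta_seq Phi r s alpha beta t u) @ \oo)) /\
  (forall u, (forall t, omega_seq Phi r s alpha t.+1 u <= omega_seq Phi r s alpha t u) /\
             lim ((fun t => omega_seq Phi r s alpha t u) @ \oo) < 1).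
Proof.
exact (@main_res R V Phi alpha beta r s alpha_ge0 beta_ge0 alpha_nd beta_cvg r_gt0 s_gt0 rs hSC hnz).
Qed.
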